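(* Let $A = \begin{bmatrix} B & C \\ C^T & D \end{bmatrix}$ be a real symmetric $n\times n$ matrix, where $B$ is $k\times k$ (so $C$ is $k \times (n-k)$ and $D$ is $(n-k)\times(n-k)$). Then the following are equivalent: (a) $\{1,2,\dots,k\}$ is a P-set of $A$; (b) $\operatorname{rank}(A) = \operatorname{rank}(D) + 2k$; (c) $\{x \in \mathbb{R}^k : x^T C \in \operatorname{RS}(D)\} = \{0\}$.
   Context: All matrices are real. $\operatorname{RS}(D)$ denotes the row space of $D$. For an $n\times n$ matrix $A$ and $\alpha \subseteq \{1,\dots,n\}$, $A(\alpha)$ denotes the principal submatrix obtained by deleting the rows and columns indexed by $\alpha$, and $\nu(A)$ denotes the nullity of $A$. A set $\alpha$ is a P-set of $A$ if $\nu(A(\alpha)) = \nu(A) + |\alpha|$. *)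

(* Defs.v *)
From HB Require Import structures.
From mathcomp Require Import all_boot all_order all_algebra.
Set Implicit Arguments. Unset Strict Implicit. Unset Printing Implicit Defensive.
Import Order.TTheory GRing.Theory Num.Theory.
Local Open Scope ring_scope.

(* Principal submatrix A(alpha): delete rows and columns indexed by alpha;
   the remaining indices ~: alpha are kept in increasing order (enum order). *)
Definition princ_del (R : Type) (n : nat) (A : 'M[R]_n) (alpha : {set 'I_n})
  : 'M[R]_#|~: alpha| :=
  \matrix_(i < #|~: alpha|, j < #|~: alpha|) A (enum_val i) (enum_val j).

Definition nullity (F : fieldType) (n : nat) (A : 'M[F]_n) : nat :=
  (n - \rank A)%N.

Definition Pset (F : fieldType) (n : nat) (A : 'M[F]_n) (alpha : {set 'I_n}) : Prop :=
  nullity (princ_del A alpha) = (nullity A + #|alpha|)%N.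

(* Main.v *)
Require Import Defs.
From HB Require Import structures.
From mathcomp Require Import all_boot all_order all_algebra.
From mathcomp Require Import zify.
Import Order.TTheory GRing.Theory Num.Theory.
Local Open Scope ring_scope.

Lemma enumC k m : map val (enum (~: [set i : 'I_(k + m) | (i < k)%N])) = iota k m.
Proof.
rewrite /enum_mem -enumT /=.
rewrite (@eq_filter _ _ (preim val [pred x : nat | (k <= x)%N])); last first.
  by move=> x; rewrite /= !inE -leqNgt.
rewrite -filter_map val_enum_ord iotaD filter_cat.
rewrite (@eq_in_filter _ _ pred0); last first.
  by move=> x; rewrite mem_iota /= add0n => h; rewrite leqNgt h.
rewrite filter_pred0 /= add0n.
rewrite (@eq_in_filter _ _ predT) ?filter_predT //.
by move=> x; rewrite mem_iota /= => /andP[h _].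
Qed.

Lemma cardC' k m : #|~: [set i : 'I_(k + m) | (i < k)%N]| = m.
Proof. by rewrite cardE -(size_map val) enumC size_iota. Qed.

Lemma card' k m : #|[set i : 'I_(k + m) | (i < k)%N]| = k.
Proof.
have := cardsC [set i : 'I_(k + m) | (i < k)%N].
rewrite cardC' card_ord => /eqP; rewrite eqn_add2r => /eqP //.
Qed.

Lemma enum_valC k m (i : 'I_#|~: [set i : 'I_(k + m) | (i < k)%N]|) :
  val (enum_val i) = (k + val i)%N.
Proof.
rewrite (enum_val_nth (enum_val i)) -(nth_map _ 0%N); last by rewrite -cardE.
rewrite enumC nth_iota //; have := ltn_ord i; by rewrite {2}(cardC' k m).
Qed.

Lemma rank_cast (F : fieldType) m n (e : m = n) (D : 'M[F]_m) :
  \rank (castmx (e, e) D) = \rank D.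
Proof. by case: n / e; rewrite castmx_id. Qed.

Lemma rank_colL (F : fieldType) p q n (X : 'M[F]_(p, n)) (Y : 'M[F]_(q, n)) :
  \rank (col_mx X Y) = (p + \rank Y)%N <->
  (forall y : 'rV[F]_p, (y *m X <= Y)%MS -> y = 0).
Proof.
have := mxrank_sum_cap X Y; rewrite addsmxE => Hs.
have hX := rank_leq_row X.
split.
- move=> Hr.
  have hXp : \rank X = p by lia.
  have hc : \rank (X :&: Y)%MS = 0%N by lia.
  move=> y hy.
  have : (y *m X <= X :&: Y)%MS by rewrite sub_capmx submxMl hy.
  move/eqP: hc; rewrite mxrank_eq0 => /eqP ->; rewrite submx0 => /eqP h.
  have hf : row_free X by rewrite /row_free hXp.
  by apply: (row_free_inj hf); rewrite /= h mul0mx.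
- move=> H.
  have hf : row_free X.
    rewrite -kermx_eq0; apply/eqP/row_matrixP => i; rewrite row0.
    apply: H; rewrite -row_mul mulmx_ker row0 sub0mx //.
  have hc : (X :&: Y)%MS == 0.
    rewrite -submx0; apply/rV_subP => v; rewrite sub_capmx => /andP[].
    move=> /submxP[w ->] hw; rewrite (H w hw) mul0mx sub0mx //.
  move: hc; rewrite -mxrank_eq0 => /eqP hc.
  move: hf; rewrite /row_free => /eqP. lia.
Qed.

Theorem theorem2p2 (R : realFieldType) (k m : nat)
  (B : 'M[R]_k) (C : 'M[R]_(k, m)) (D : 'M[R]_m)
  (hB : B^T = B) (hD : D^T = D) :
  let A : 'M[R]_(k + m) := block_mx B C C^T D in
  [<-> Pset A [set i : 'I_(k + m) | (i < k)%N];
       \rank A = (\rank D + 2 * k)%N;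
       forall x : 'rV[R]_k, (x *m C <= D)%MS -> x = 0].
Proof.
move=> A.
set alpha := [set i : 'I_(k + m) | (i < k)%N].
have hpd : princ_del A alpha = castmx (esym (cardC' k m), esym (cardC' k m)) D.
  apply/matrixP => i j; rewrite castmxE mxE.
  have ei : enum_val i = rshift k (cast_ord (esym (esym (cardC' k m))) i).
    by apply: val_inj; rewrite enum_valC.
  have ej : enum_val j = rshift k (cast_ord (esym (esym (cardC' k m))) j).
    by apply: val_inj; rewrite enum_valC.
  by rewrite ei ej /A block_mxEdr.
have hrp : \rank (princ_del A alpha) = \rank D by rewrite hpd rank_cast.
have hA : (\rank A <= k + m)%N := rank_leq_row A.
have hDm : (\rank D <= m)%N := rank_leq_row D.
have hT : \rank (row_mx C^T D) = \rank (col_mx C D).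
  by rewrite -mxrank_tr tr_row_mx trmxK hD.
have hcol : (\rank (col_mx C D) <= k + \rank D)%N.
  by rewrite -addsmxE; apply: leq_trans (mxrank_adds_leqif _ _) _; rewrite leq_add2r rank_leq_row.
have hAle : (\rank A <= k + \rank (row_mx C^T D))%N.
  rewrite /A /block_mx -addsmxE; apply: leq_trans (mxrank_adds_leqif _ _) _.
  by rewrite leq_add2r rank_leq_row.
split; [|split].
- rewrite /Pset /nullity hrp cardC' card'. lia.
- move=> hr x hx.
  have hc : \rank (col_mx C D) = (k + \rank D)%N by lia.
  by move/rank_colL: hc; apply.
- move=> H.
  have hc := (proj2 (@rank_colL _ _ _ _ C D)) H.
  have hr : \rank A = (k + \rank (row_mx C^T D))%N.
    apply/(@rank_colL _ _ _ _ (row_mx B C) (row_mx C^T D)) => y.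
    rewrite mul_mx_row => /submxP[z]; rewrite mul_mx_row => /eq_row_mx[_ h].
    by apply: H; rewrite h submxMl.
  rewrite /Pset /nullity hrp cardC' card'. have hh := rank_leq_col (col_mx C D). move: hc hr hT hh. set a := \rank A. set b := \rank (col_mx C D). set c := \rank (row_mx _ _). set d := \rank D. move=> *. lia.
Qed.
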